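(* Let $F \in \mathbb{C}^{n \times n}$ be a unitary matrix with $|F_{ij}|^2 \leq \frac{c}{n}$ for all $i,j$ (for some constant $c>0$), let $I\in\mathbb{C}^{n\times n}$ be the identity, and let $A = [F \enspace I] \in \mathbb{C}^{n \times 2n}$. Let $1 \leq k,t \leq n$ be integers, let $\hat{x}\in\mathbb{C}^n$, let $e \in \mathbb{C}^n$ be $t$-sparse, and let $y = F\hat{x} + e$. Define $$\delta_{k,t} = \sqrt{\frac{ckt}{n}}, \quad \beta = \sqrt{\frac{\max\{k,t\}c}{n}}, \quad \theta = \frac{\sqrt{k+t}}{1- \delta_{k,t}}\beta, \quad \tau = \frac{\sqrt{1 + \delta_{k,t}}}{1 - \delta_{k,t}}.$$ If $0 < \delta_{k,t} < 1$ and $0 < \theta < 1$, then for any solution $x^{\#}$ of the Basis Pursuit problem $\min_{z \in \mathbb{C}^{2n}} \|z\|_1$ subject to $\|Az - y\|_2 \leq \|\hat{x}_{t(k)}\|_2$, writing $x^{\#} = [\hat{x}^{\#} \enspace e^{\#}]^T$ with $\hat{x}^{\#}, e^{\#}\in\mathbb{C}^n$, we have $$\|\hat{x}^{\#} - \hat{x}_{h(k)}\|_2 \leq \left(\frac{2\tau \sqrt{k+t}}{1-\theta} \left(1 + \frac{\beta}{1 - \delta_{k,t}} \right) + 2 \tau \right)\|\hat{x}_{t(k)}\|_2 .$$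
   Context: A vector is $t$-sparse if it has at most $t$ nonzero entries. For $x \in \mathbb{C}^n$, $x_{h(k)}$ denotes a $k$-sparse vector consisting of $k$ largest (in absolute value) entries of $x$ with all other entries zero, and $x_{t(k)} := x - x_{h(k)}$. *)

(* Defs.v *)
(* The complex field is an arbitrary numClosedFieldType C
   (e.g. algC, or R[i] for a real closed field R); real quantities live in C
   as elements with 0 <= x, ordered by C's (partial) order. *)
From HB Require Import structures.
From mathcomp Require Import all_boot all_order all_algebra.
Set Implicit Arguments. Unset Strict Implicit. Unset Printing Implicit Defensive.
Import Order.TTheory GRing.Theory Num.Theory.
Local Open Scope ring_scope.

Section Defs.
Variable C : numClosedFieldType.

Definition adjmx (m n : nat) (M : 'M[C]_(m, n)) : 'M[C]_(n, m) :=
  (map_mx Num.conj M)^T.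

(* unitary: F^* F = I (for square matrices equivalent to F F^* = I) *)
Definition unitary (n : nat) (F : 'M[C]_n) : Prop := adjmx F *m F = 1%:M.

Definition norm1 (n : nat) (v : 'cV[C]_n) : C := \sum_(i < n) `|v i 0|.
Definition norm2 (n : nat) (v : 'cV[C]_n) : C :=
  sqrtC (\sum_(i < n) `|v i 0| ^+ 2).

Definition sparse (n t : nat) (v : 'cV[C]_n) : Prop :=
  (#|[set i : 'I_n | v i ord0 != 0%R]| <= t)%N.

(* xh is "a" x_{h(k)}: the restriction of x to a set S of k indices
   carrying k largest entries in absolute value (ties broken arbitrarily). *)
Definition is_head (n k : nat) (x xh : 'cV[C]_n) : Prop :=
  exists S : {set 'I_n},
    [/\ #|S| = k,
        (forall i j, i \in S -> j \notin S -> `|x j 0| <= `|x i 0|)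
      & xh = \col_i (if i \in S then x i 0 else 0)].

Definition BP_solution (m N : nat) (A : 'M[C]_(m, N)) (y : 'cV[C]_m)
    (eta : C) (z : 'cV[C]_N) : Prop :=
  norm2 (A *m z - y) <= eta /\
  forall w : 'cV[C]_N, norm2 (A *m w - y) <= eta -> norm1 z <= norm1 w.

End Defs.

(* Main.v *)
Require Import Defs.
From HB Require Import structures.
From mathcomp Require Import all_boot all_order all_algebra ring.
Set Implicit Arguments. Unset Strict Implicit. Unset Printing Implicit Defensive.
Import Order.TTheory GRing.Theory Num.Theory.
Local Open Scope ring_scope.

Section Aux.
Variable C : numClosedFieldType.

Lemma nn_real (x : C) : 0 <= x -> x \is Num.real.
Proof. by move=> h; apply: ger0_real. Qed.

Lemma sqr_real_ge0 (x : C) : x \is Num.real -> 0 <= x ^+ 2.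
Proof. by rewrite realEsqr. Qed.

Lemma rcs (I : finType) (P : pred I) (p q : I -> C) :
  (forall i, 0 <= p i) -> (forall i, 0 <= q i) ->
  \sum_(i | P i) p i * q i <=
    sqrtC (\sum_(i | P i) p i ^+ 2) * sqrtC (\sum_(i | P i) q i ^+ 2).
Proof.
move=> hp hq.
set X := sqrtC _; set Y := sqrtC _.
have X0 : 0 <= X by rewrite sqrtC_ge0 sumr_ge0 // => i _; rewrite exprn_ge0.
have Y0 : 0 <= Y by rewrite sqrtC_ge0 sumr_ge0 // => i _; rewrite exprn_ge0.
have hX : X ^+ 2 = \sum_(i | P i) p i ^+ 2 by rewrite sqrtCK.
have hY : Y ^+ 2 = \sum_(i | P i) q i ^+ 2 by rewrite sqrtCK.
have [X00|Xp] := eqVneq X 0.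
  have hz : forall i, P i -> p i ^+ 2 = 0.
    apply: psumr_eq0P => [i _|]; first by rewrite exprn_ge0.
    by rewrite -hX X00 expr0n.
  rewrite big1 ?mulr_ge0 // => i /hz /eqP; rewrite expf_eq0 /= => /eqP ->.
  by rewrite mul0r.
have [Y00|Yp] := eqVneq Y 0.
  have hz : forall i, P i -> q i ^+ 2 = 0.
    apply: psumr_eq0P => [i _|]; first by rewrite exprn_ge0.
    by rewrite -hY Y00 expr0n.
  rewrite big1 ?mulr_ge0 // => i /hz /eqP; rewrite expf_eq0 /= => /eqP ->.
  by rewrite mulr0.
have XY : 0 < X * Y by rewrite mulr_gt0 // lt_def ?Xp ?Yp.
have h0 : 0 <= \sum_(i | P i) (p i * Y - q i * X) ^+ 2.
  apply: sumr_ge0 => i _; apply: sqr_real_ge0.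
  by rewrite rpredB // rpredM // nn_real.
have e : \sum_(i | P i) (p i * Y - q i * X) ^+ 2 =
   2 * (X * Y) * (X * Y - \sum_(i | P i) p i * q i).
  have -> : \sum_(i | P i) (p i * Y - q i * X) ^+ 2 =
     \sum_(i | P i) (p i ^+ 2 * Y ^+ 2 + q i ^+ 2 * X ^+ 2 - 2 * (X * Y) * (p i * q i)).
    by apply: eq_bigr => i _; ring.
  rewrite sumrB big_split /= -!mulr_suml -mulr_sumr -hX -hY; ring.
rewrite e in h0.
have : 0 <= X * Y - \sum_(i | P i) p i * q i.
  by rewrite -(pmulr_rge0 _ (_ : 0 < 2 * (X * Y))) // mulr_gt0.
by rewrite subr_ge0.
Qed.


Variable n : nat.
Implicit Types (u w : 'cV[C]_n) (S : {set 'I_n}).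

Definition sq u := \sum_(i < n) `|u i 0| ^+ 2.
Definition ip u w := \sum_(i < n) u i 0 * (w i 0)^*.
Definition res S u : 'cV[C]_n := \col_i (if i \in S then u i 0 else 0).
Definition n1 S u := \sum_(i in S) `|u i 0|.

Lemma sq_ge0 u : 0 <= sq u.
Proof. by apply: sumr_ge0 => i _; rewrite exprn_ge0. Qed.

Lemma n1_ge0 S u : 0 <= n1 S u.
Proof. by apply: sumr_ge0 => i _. Qed.

Lemma ip_self u : ip u u = sq u.
Proof. by apply: eq_bigr => i _; rewrite normCK. Qed.

Lemma ip_conj u w : ip w u = (ip u w)^*.
Proof.
rewrite /ip rmorph_sum; apply: eq_bigr => i _.
by rewrite rmorphM /= conjCK mulrC.
Qed.

Lemma ipDl u u' w : ip (u + u') w = ip u w + ip u' w.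
Proof. by rewrite /ip -big_split; apply: eq_bigr => i _; rewrite mxE mulrDl. Qed.

Lemma ipDr u w w' : ip u (w + w') = ip u w + ip u w'.
Proof. by rewrite /ip -big_split; apply: eq_bigr => i _; rewrite mxE rmorphD mulrDr. Qed.

Lemma ipBr u w w' : ip u (w - w') = ip u w - ip u w'.
Proof.
rewrite /ip -sumrB; apply: eq_bigr => i _.
by rewrite !mxE rmorphB mulrBr.
Qed.

Lemma sqD u w : sq (u + w) = sq u + sq w + (ip u w + (ip u w)^*).
Proof. rewrite -!ip_self ipDl !ipDr (ip_conj u w); ring. Qed.

Lemma norm_zz (z : C) : `|z + z^*| <= 2 * `|z|.
Proof. by rewrite (le_trans (ler_normD _ _)) // norm_conjC mulr2n mulrDl mul1r. Qed.

Lemma ip_bound u w : `|ip u w| <= sqrtC (sq u) * sqrtC (sq w).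
Proof.
apply: (le_trans (ler_norm_sum _ _ _)).
have -> : \sum_(i < n) `|u i 0 * (w i 0)^*| = \sum_(i < n) `|u i 0| * `|w i 0|.
  by apply: eq_bigr => i _; rewrite normrM norm_conjC.
have := (@rcs _ xpredT (fun i => `|u i 0|) (fun i => `|w i 0|) (fun i => normr_ge0 _) (fun i => normr_ge0 _)).
by rewrite /sq.
Qed.

Lemma sqrt_sqD u w : sqrtC (sq (u + w)) <= sqrtC (sq u) + sqrtC (sq w).
Proof.
have h0 : 0 <= sqrtC (sq u) + sqrtC (sq w) by rewrite addr_ge0 // sqrtC_ge0 sq_ge0.
rewrite -(sqrCK h0) ler_sqrtC ?nnegrE ?sq_ge0 ?exprn_ge0 //.
rewrite sqD.
have -> : (sqrtC (sq u) + sqrtC (sq w)) ^+ 2 =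
   sq u + sq w + 2 * (sqrtC (sq u) * sqrtC (sq w)).
  by rewrite sqrrD !sqrtCK; ring.
rewrite lerD2l.
have hr : ip u w + (ip u w)^* \is Num.real.
  have -> : ip u w + (ip u w)^* = sq (u + w) - (sq u + sq w) by rewrite sqD; ring.
  by rewrite rpredB // nn_real // ?addr_ge0 ?sq_ge0.
apply: le_trans (real_ler_norm hr) _.
exact: le_trans (norm_zz _) (ler_wpM2l _ (ip_bound u w)).
Qed.

Lemma sqN u : sq (- u) = sq u.
Proof. by apply: eq_bigr => i _; rewrite mxE normrN. Qed.

Lemma resE S u i : res S u i 0 = if i \in S then u i 0 else 0.
Proof. by rewrite mxE. Qed.

Lemma res_split S u : u = res S u + res (~: S) u.
Proof.
apply/matrixP => i j; rewrite (ord1 j) !mxE in_setC.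
by case: (i \in S); rewrite ?addr0 ?add0r.
Qed.

Lemma sum_res S (g : C -> C) : g 0 = 0 -> forall u,
  \sum_(i < n) g (res S u i 0) = \sum_(i in S) g (u i 0).
Proof.
move=> g0 u; rewrite [RHS]big_mkcond /=; apply: eq_bigr => i _.
by rewrite resE; case: (i \in S).
Qed.

Lemma sq_res S u : sq (res S u) = \sum_(i in S) `|u i 0| ^+ 2.
Proof. by apply: (@sum_res S (fun x => `|x| ^+ 2)); rewrite normr0 expr0n. Qed.

Lemma n1_res S u : \sum_(i < n) `|res S u i 0| = n1 S u.
Proof. by apply: (@sum_res S (fun x => `|x|)); rewrite normr0. Qed.

Lemma ip_res0 S u w : ip (res S u) (res (~: S) w) = 0.
Proof.
apply: big1 => i _; rewrite !resE in_setC.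
by case: (i \in S); rewrite ?mul0r ?conjC0 ?mulr0.
Qed.

Lemma sumsq_le (I : finType) (A : pred I) (g : I -> C) : (forall i, 0 <= g i) ->
  \sum_(i in A) g i ^+ 2 <= (\sum_(i in A) g i) ^+ 2.
Proof.
move=> hg; rewrite [X in _ <= X]expr2 mulr_suml; apply: ler_sum => i iA.
rewrite expr2 ler_wpM2l //.
rewrite (bigD1 i) //= ler_wpDr //; exact: sumr_ge0.
Qed.

Lemma l1l2 S u (k : nat) : (#|S| <= k)%N ->
  n1 S u <= sqrtC k%:R * sqrtC (sq (res S u)).
Proof.
move=> hk.
have := @rcs _ (fun i => i \in S) (fun i => `|u i 0|) (fun _ => 1) (fun i => normr_ge0 _) (fun _ => ler01).
rewrite /n1 sq_res.
under eq_bigr do rewrite mulr1.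
have -> : \sum_(i in S) (1:C) ^+ 2 = #|S|%:R.
  by rewrite -sumr_const; apply: eq_bigr => i _; rewrite expr1n.
move=> h; apply: (le_trans h); rewrite mulrC ler_wpM2r ?sqrtC_ge0 //.
  by rewrite sumr_ge0 // => i _; rewrite exprn_ge0.
by rewrite ler_sqrtC ?nnegrE ?ler0n // ler_nat.
Qed.


Lemma ip_mx u w : ip u w = (adjmx w *m u) 0 0.
Proof. rewrite mxE; apply: eq_bigr => i _; rewrite !mxE mulrC //. Qed.

Lemma adjmxM m p (M : 'M[C]_(m, n)) (N : 'M[C]_(n, p)) :
  adjmx (M *m N) = adjmx N *m adjmx M.
Proof. by rewrite /adjmx map_mxM trmx_mul. Qed.

Lemma ip_unitary (F : 'M[C]_n) u w : unitary F -> ip (F *m u) (F *m w) = ip u w.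
Proof.
move=> hF; rewrite !ip_mx adjmxM -mulmxA (mulmxA (adjmx F)) hF mul1mx //.
Qed.

Lemma sq_unitary (F : 'M[C]_n) u : unitary F -> sq (F *m u) = sq u.
Proof. by move=> hF; rewrite -!ip_self ip_unitary. Qed.

Lemma ip_coh (F : 'M[C]_n) (mu : C) u w : (forall i j, `|F i j| <= mu) ->
  `|ip (F *m u) w| <= mu * (\sum_i `|u i 0|) * (\sum_j `|w j 0|).
Proof.
move=> hF; apply: (le_trans (ler_norm_sum _ _ _)).
rewrite mulr_sumr; apply: ler_sum => j _.
rewrite normrM norm_conjC ler_wpM2r // mxE.
apply: (le_trans (ler_norm_sum _ _ _)); rewrite mulr_sumr; apply: ler_sum => i _.
by rewrite normrM ler_wpM2r.
Qed.


Lemma nsp (F : 'M[C]_n) (mu delta beta : C) (k t : nat) S (T : {set 'I_n}) (a b : 'cV[C]_n) :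
  unitary F -> (forall i j, `|F i j| <= mu) -> 0 <= mu -> 0 <= delta ->
  mu * sqrtC k%:R * sqrtC t%:R <= delta ->
  mu * sqrtC k%:R <= beta -> mu * sqrtC t%:R <= beta ->
  (#|S| <= k)%N -> (#|T| <= t)%N ->
  sqrtC (sq (res S a) + sq (res T b)) * (1 - delta) <=
    sqrtC (1 + delta) * sqrtC (sq (F *m a + b)) + beta * (n1 (~:S) a + n1 (~:T) b).
Proof.
move=> hF hFmu mu0 d0 hd hbk hbt hS hT.
set a0 := res S a; set a' := res (~:S) a; set b0 := res T b; set b' := res (~:T) b.
set P := sq a0 + sq b0.
set X := F *m a0 + b0; set Y := F *m a' + b'.
have hW : F *m a + b = X + Y.
  rewrite {1}(res_split S a) {1}(res_split T b) mulmxDr /X /Y -/a0 -/a' -/b0 -/b'.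
  by rewrite addrACA.
set x := sqrtC (sq a0); set y := sqrtC (sq b0); set p := sqrtC P.
have x0 : 0 <= x by rewrite sqrtC_ge0 sq_ge0.
have y0 : 0 <= y by rewrite sqrtC_ge0 sq_ge0.
have p0 : 0 <= p by rewrite sqrtC_ge0 addr_ge0 ?sq_ge0.
have hx : x <= p by rewrite ler_sqrtC ?nnegrE ?sq_ge0 ?addr_ge0 ?sq_ge0 // ler_wpDr ?sq_ge0.
have hy : y <= p by rewrite ler_sqrtC ?nnegrE ?sq_ge0 ?addr_ge0 ?sq_ge0 // ler_wpDl ?sq_ge0.
have sk0 : 0 <= sqrtC (k%:R : C) by rewrite sqrtC_ge0 ler0n.
have st0 : 0 <= sqrtC (t%:R : C) by rewrite sqrtC_ge0 ler0n.
have b0' : 0 <= beta by apply: le_trans hbk; rewrite mulr_ge0.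
have hSa : n1 S a <= sqrtC k%:R * x by apply: l1l2.
have hTb : n1 T b <= sqrtC t%:R * y by apply: l1l2.
set z := ip (F *m a0) b0.
have hz : `|z| <= delta * (x * y).
  apply: (le_trans (ip_coh _ _ hFmu)); rewrite !n1_res.
  apply: le_trans (_ : mu * (sqrtC k%:R * x) * (sqrtC t%:R * y) <= _).
    by rewrite ler_pM ?mulr_ge0 ?n1_ge0 // ler_wpM2l.
  have -> : mu * (sqrtC k%:R * x) * (sqrtC t%:R * y) = (mu * sqrtC k%:R * sqrtC t%:R) * (x * y) by ring.
  by rewrite ler_wpM2r ?mulr_ge0.
have hP : P = x ^+ 2 + y ^+ 2 by rewrite !sqrtCK.
have hxy : 2 * (x * y) <= P.
  rewrite -subr_ge0 hP.
  have -> : x ^+ 2 + y ^+ 2 - 2 * (x * y) = (x - y) ^+ 2 by ring.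
  by apply: sqr_real_ge0; rewrite rpredB // nn_real.
have hzz : `|z + z^*| <= delta * P.
  apply: le_trans (norm_zz z) _.
  apply: le_trans (_ : 2 * (delta * (x * y)) <= _); first by rewrite ler_wpM2l.
  by rewrite mulrCA ler_wpM2l.
have sqX : sq X = P + (z + z^*) by rewrite /X sqD sq_unitary.
have hzr : z + z^* \is Num.real.
  have -> : z + z^* = sq X - P by rewrite sqX; ring.
  by rewrite rpredB // nn_real // ?sq_ge0 ?addr_ge0 ?sq_ge0.
have lowX : P * (1 - delta) <= sq X.
  rewrite sqX mulrBr mulr1 lerD2l lerNl.
  apply: le_trans (real_ler_norm _) _; first by rewrite rpredN.
  by rewrite normrN mulrC.
have upX : sq X <= P * (1 + delta).
  rewrite sqX mulrDr mulr1 lerD2l.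
  by apply: le_trans (real_ler_norm hzr) _; rewrite mulrC.
have sX : sqrtC (sq X) <= sqrtC (1 + delta) * p.
  rewrite -sqrtCM ?nnegrE ?addr_ge0 ?sq_ge0 //.
  by rewrite ler_sqrtC ?nnegrE ?sq_ge0 ?mulr_ge0 ?addr_ge0 ?sq_ge0 // mulrC.
have eX : sq X = ip X (F *m a + b) - ip X Y by rewrite hW ipDr ip_self addrK.
have hXY : `|ip X Y| <= beta * p * (n1 (~:S) a + n1 (~:T) b).
  have -> : ip X Y = ip (F *m a0) b' + (ip (F *m a') b0)^*.
    rewrite /X /Y !ipDl !ipDr ip_unitary // ip_res0 ip_res0 (ip_conj (F *m a')).
    by rewrite add0r addr0.
  apply: le_trans (ler_normD _ _) _; rewrite norm_conjC mulrDr addrC.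
  apply: lerD.
    apply: (le_trans (ip_coh _ _ hFmu)); rewrite !n1_res.
    apply: le_trans (_ : mu * n1 (~: S) a * (sqrtC t%:R * y) <= _).
      by rewrite ler_wpM2l // mulr_ge0 // n1_ge0.
    have -> : mu * n1 (~: S) a * (sqrtC t%:R * y) = (mu * sqrtC t%:R) * y * n1 (~: S) a by ring.
    by rewrite ler_wpM2r ?n1_ge0 // ler_pM ?mulr_ge0.
  apply: (le_trans (ip_coh _ _ hFmu)); rewrite !n1_res.
  apply: le_trans (_ : mu * (sqrtC k%:R * x) * n1 (~: T) b <= _).
    by rewrite ler_wpM2r ?n1_ge0 // ler_wpM2l.
  have -> : mu * (sqrtC k%:R * x) * n1 (~: T) b = (mu * sqrtC k%:R) * x * n1 (~: T) b by ring.
  by rewrite ler_wpM2r ?n1_ge0 // ler_pM ?mulr_ge0.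
have hXW : `|ip X (F *m a + b)| <= sqrtC (1 + delta) * p * sqrtC (sq (F *m a + b)).
  apply: le_trans (ip_bound _ _) _.
  by rewrite ler_wpM2r ?sqrtC_ge0 ?sq_ge0.
have main : P * (1 - delta) <=
    p * (sqrtC (1 + delta) * sqrtC (sq (F *m a + b)) + beta * (n1 (~:S) a + n1 (~:T) b)).
  apply: le_trans lowX _.
  rewrite -(ger0_norm (sq_ge0 X)) eX.
  apply: le_trans (ler_normB _ _) _.
  rewrite mulrDr; apply: lerD.
    by apply: le_trans hXW _; rewrite mulrCA mulrA.
  by apply: le_trans hXY _; rewrite mulrCA mulrA.
have [p00|pp] := eqVneq p 0.
  rewrite -/p p00 mul0r addr_ge0 // ?mulr_ge0 ?sqrtC_ge0 ?addr_ge0 ?n1_ge0 ?sq_ge0 //.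
have pgt : 0 < p by rewrite lt_def pp p0.
rewrite -/p -(ler_pM2l pgt) mulrA.
have -> : p * p = P by rewrite -expr2 sqrtCK.
exact: main.
Qed.


Lemma cs2 (al be x y : C) : 0 <= al -> 0 <= be -> 0 <= x -> 0 <= y ->
  al * x + be * y <= sqrtC (al ^+ 2 + be ^+ 2) * sqrtC (x ^+ 2 + y ^+ 2).
Proof.
move=> a0 b0 x0 y0.
have h0 : 0 <= al * x + be * y by rewrite addr_ge0 ?mulr_ge0.
rewrite -(sqrCK h0) -sqrtCM ?nnegrE ?addr_ge0 ?exprn_ge0 //.
rewrite ler_sqrtC ?nnegrE ?exprn_ge0 ?mulr_ge0 ?addr_ge0 ?exprn_ge0 //.
rewrite -subr_ge0.
have -> : (al ^+ 2 + be ^+ 2) * (x ^+ 2 + y ^+ 2) - (al * x + be * y) ^+ 2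
   = (al * y - be * x) ^+ 2 by ring.
apply: sqr_real_ge0; rewrite rpredB // rpredM // nn_real // ?mulr_ge0.
all: by rewrite mulr_ge0.
Qed.

Lemma cone_part S (u d : 'cV[C]_n) : (forall i, i \notin S -> u i 0 = 0) ->
  \sum_i `|u i 0| - \sum_i `|u i 0 + d i 0| <= n1 S d - n1 (~: S) d.
Proof.
move=> hu; rewrite -sumrB (bigID (mem S)) /=.
have -> : n1 (~: S) d = \sum_(i | ~~ (i \in S)) `|d i 0|.
  by apply: eq_bigl => i; rewrite in_setC.
apply: lerD.
  apply: ler_sum => i _; rewrite lerBlDl.
  by have := lerB_normD (u i 0) (d i 0); rewrite lerBlDr.
apply: le_trans (_ : _ <= \sum_(i | ~~ (i \in S)) - `|d i 0|) _.
  by apply: ler_sum => i hi; rewrite hu // add0r normr0 sub0r.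
by rewrite sumrN.
Qed.

Lemma norm1_col (u w : 'cV[C]_n) : norm1 (col_mx u w) = norm1 u + norm1 w.
Proof.
rewrite /norm1 big_split_ord /=; congr (_ + _); apply: eq_bigr => i _.
  by rewrite col_mxEu.
by rewrite col_mxEd.
Qed.

End Aux.

Unset Implicit Arguments.
Set Strict Implicit.

Theorem theorem2 (C : numClosedFieldType) (n : nat) (F : 'M[C]_n) (c : C)
  (k t : nat) (xhat e : 'cV[C]_n) (xh : 'cV[C]_n) (xs : 'cV[C]_(n + n)) :
  unitary F ->
  0 < c ->
  (forall i j, `|F i j| ^+ 2 <= c / n%:R) ->
  (1 <= k <= n)%N -> (1 <= t <= n)%N ->
  sparse t e ->
  is_head k xhat xh ->
  let A : 'M[C]_(n, n + n) := row_mx F 1%:M in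
  let y := F *m xhat + e in
  let delta := sqrtC (c * k%:R * t%:R / n%:R) in
  let beta := sqrtC ((maxn k t)%:R * c / n%:R) in
  let theta := sqrtC (k + t)%:R / (1 - delta) * beta in
  let tau := sqrtC (1 + delta) / (1 - delta) in
  0 < delta < 1 -> 0 < theta < 1 ->
  BP_solution A y (norm2 (xhat - xh)) xs ->
  norm2 (usubmx xs - xh) <=
    (2 * tau * sqrtC (k + t)%:R / (1 - theta) * (1 + beta / (1 - delta))
       + 2 * tau) * norm2 (xhat - xh).
Proof.
move=> hF c0 hFc hk ht he [S [hSk hSmax hxh]] A y delta beta theta tau.
move=> /andP[d0 d1] /andP[th0 th1] [hfeas hmin].
set eta := norm2 (xhat - xh).
have cn0 : 0 <= c / n%:R by rewrite divr_ge0 ?ler0n // ltW.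
set mu := sqrtC (c / n%:R).
have mu0 : 0 <= mu by rewrite sqrtC_ge0.
have hFmu : forall i j, `|F i j| <= mu.
  move=> i j; rewrite -(sqrCK (normr_ge0 (F i j))).
  by rewrite ler_sqrtC ?nnegrE ?exprn_ge0.
have hdelta : mu * sqrtC (k%:R : C) * sqrtC (t%:R : C) = delta.
  rewrite /mu /delta -!sqrtCM ?nnegrE ?ler0n ?mulr_ge0 ?ler0n ?(ltW c0) ?invr_ge0 ?ler0n //.
  congr sqrtC; ring.
have hbk : mu * sqrtC (k%:R : C) <= beta.
  rewrite /mu /beta -!sqrtCM ?nnegrE ?ler0n //.
  have -> : c / n%:R * k%:R = k%:R * (c / n%:R) by rewrite mulrC.
  have -> : (maxn k t)%:R * c / n%:R = (maxn k t)%:R * (c / n%:R) by rewrite mulrA.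
  rewrite ler_sqrtC ?nnegrE ?mulr_ge0 ?ler0n ?invr_ge0 ?ler0n ?(ltW c0) //.
  by apply: ler_wpM2r => //; rewrite ler_nat leq_maxl.
have hbt : mu * sqrtC (t%:R : C) <= beta.
  rewrite /mu /beta -!sqrtCM ?nnegrE ?ler0n //.
  have -> : c / n%:R * t%:R = t%:R * (c / n%:R) by rewrite mulrC.
  have -> : (maxn k t)%:R * c / n%:R = (maxn k t)%:R * (c / n%:R) by rewrite mulrA.
  rewrite ler_sqrtC ?nnegrE ?mulr_ge0 ?ler0n ?invr_ge0 ?ler0n ?(ltW c0) //.
  by apply: ler_wpM2r => //; rewrite ler_nat leq_maxr.
set T := [set i | e i ord0 != 0].
have hT : (#|T| <= t)%N by exact: he.
have hS : (#|S| <= k)%N by rewrite hSk.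
set a := usubmx xs - xh; set b := dsubmx xs - e.
have hAxs : A *m xs = F *m usubmx xs + dsubmx xs.
  by rewrite /A -{1}(vsubmxK xs) mul_row_col mul1mx.
have hW : F *m a + b = (A *m xs - y) - F *m (xh - xhat).
  rewrite hAxs /y /a /b !mulmxBr.
  move: (F *m usubmx xs) (F *m xh) (F *m xhat) (dsubmx xs) (e) => p q r s u.
  by apply/matrixP => i j; rewrite !mxE; ring.
have hf : sqrtC (sq (A *m xs - y)) <= eta := hfeas.
have hN : sqrtC (sq (F *m a + b)) <= 2 * eta.
  rewrite hW; apply: le_trans (sqrt_sqD _ _) _.
  rewrite sqN sq_unitary //.
  have -> : sq (xh - xhat) = sq (xhat - xh) by rewrite -sqN opprB.
  by rewrite mulr_natl mulr2n; apply: lerD.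
have hcone : n1 (~:S) a + n1 (~:T) b <= n1 S a + n1 T b.
  have hf2 : norm2 (A *m col_mx xh e - y) <= eta.
    have -> : A *m col_mx xh e - y = - (F *m (xhat - xh)).
      rewrite /A mul_row_col mul1mx /y mulmxBr.
      move: (F *m xh) (F *m xhat) (e) => q r u.
      by apply/matrixP => i j; rewrite !mxE; ring.
    change (sqrtC (sq (- (F *m (xhat - xh)))) <= eta).
    by rewrite sqN sq_unitary.
  have := hmin _ hf2.
  rewrite norm1_col -{1}(vsubmxK xs) norm1_col.
  have ua : usubmx xs = xh + a by rewrite /a addrC subrK.
  have db : dsubmx xs = e + b by rewrite /b addrC subrK.
  rewrite ua db.
  have e1 : norm1 (xh + a) = \sum_i `|xh i 0 + a i 0|.
    by apply: eq_bigr => i _; rewrite mxE.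
  have e2 : norm1 (e + b) = \sum_i `|e i 0 + b i 0|.
    by apply: eq_bigr => i _; rewrite mxE.
  rewrite e1 e2 => h1.
  have c1 := @cone_part C n S xh a.
  have c2 := @cone_part C n T e b.
  have : 0 <= (n1 S a - n1 (~: S) a) + (n1 T b - n1 (~: T) b).
    apply: le_trans (lerD (c1 _) (c2 _)).
    - move: h1; rewrite -subr_ge0 => h1; apply: le_trans h1 _.
      have -> : norm1 xh + norm1 e - (\sum_i `|xh i 0 + a i 0| + \sum_i `|e i 0 + b i 0|)
        = (\sum_i `|xh i 0| - \sum_i `|xh i 0 + a i 0|) + (\sum_i `|e i 0| - \sum_i `|e i 0 + b i 0|).
        by rewrite /norm1; ring.
      by [].
    - by move=> i hi; rewrite hxh mxE (negbTE hi).
    - by move=> i; rewrite inE negbK => /eqP.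
  move=> h; rewrite -subr_ge0; apply: le_trans h _.
  have -> : n1 S a + n1 T b - (n1 (~: S) a + n1 (~: T) b) = (n1 S a - n1 (~: S) a) + (n1 T b - n1 (~: T) b) by ring.
  by [].
set La := n1 (~:S) a; set Lb := n1 (~:T) b; set L := La + Lb.
set P := sq (res S a) + sq (res T b); set p := sqrtC P.
set N := sqrtC (sq (F *m a + b)).
have La0 : 0 <= La by apply: n1_ge0.
have Lb0 : 0 <= Lb by apply: n1_ge0.
have L0 : 0 <= L by rewrite addr_ge0.
have p0 : 0 <= p by rewrite sqrtC_ge0 addr_ge0 ?sq_ge0.
have N0 : 0 <= N by rewrite sqrtC_ge0 sq_ge0.
have eta0 : 0 <= eta by rewrite sqrtC_ge0 sq_ge0.
have beta0 : 0 <= beta by apply: le_trans hbk; rewrite mulr_ge0 // sqrtC_ge0 ler0n.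
have dpos : 0 < 1 - delta by rewrite subr_gt0.
have tpos : 0 < 1 - theta by rewrite subr_gt0.
have tau0 : 0 <= tau.
  by rewrite /tau divr_ge0 ?(ltW dpos) // sqrtC_ge0 addr_ge0 ?ler01 ?(ltW d0).
have skt0 : 0 <= sqrtC ((k + t)%:R : C) by rewrite sqrtC_ge0 ler0n.
have hnsp : p * (1 - delta) <= sqrtC (1 + delta) * N + beta * L.
    have hd' : mu * sqrtC (k%:R : C) * sqrtC (t%:R : C) <= delta by rewrite hdelta.
  exact: (nsp a b hF hFmu mu0 (ltW d0) hd' hbk hbt hS hT).
have hL : L <= sqrtC (k + t)%:R * p.
  apply: le_trans hcone _.
  apply: le_trans (lerD (l1l2 a hS) (l1l2 b hT)) _.
  apply: le_trans (cs2 _ _ _ _) _; rewrite ?sqrtC_ge0 ?ler0n ?sq_ge0 //.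
  by rewrite !sqrtCK -natrD.
have E1 : p <= tau * N + beta / (1 - delta) * L.
  rewrite -(ler_pM2r dpos).
  have -> : (tau * N + beta / (1 - delta) * L) * (1 - delta) = sqrtC (1 + delta) * N + beta * L.
    rewrite /tau; field; by rewrite lt0r_neq0.
  exact: hnsp.
have E2 : L <= sqrtC (k + t)%:R * tau * N + theta * L.
  apply: le_trans hL _.
  apply: le_trans (ler_wpM2l skt0 E1) _.
  have -> : sqrtC (k + t)%:R * (tau * N + beta / (1 - delta) * L) = sqrtC (k + t)%:R * tau * N + theta * L.
    by rewrite /theta; ring.
  by [].
have E3 : L <= sqrtC (k + t)%:R * tau * N / (1 - theta).
  by rewrite ler_pdivlMr // mulrBr mulr1 lerBlDr (mulrC L theta).
have E4 : sqrtC (sq a) <= p + L.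
  have pL0 : 0 <= p + L by rewrite addr_ge0.
  rewrite -(sqrCK pL0) ler_sqrtC ?nnegrE ?sq_ge0 ?exprn_ge0 //.
  have -> : sq a = sq (res S a) + sq (res (~:S) a).
    by rewrite {1}(res_split S a) sqD ip_res0 conjC0 !addr0.
  have h2 : sq (res (~:S) a) <= L ^+ 2.
    rewrite sq_res; apply: le_trans (sumsq_le _ _) _ => //.
    rewrite !expr2; apply: ler_pM => //; rewrite ?n1_ge0 //; exact: ler_wpDr.
  have h3 : sq (res S a) <= P by rewrite ler_wpDr ?sq_ge0.
  apply: le_trans (lerD h3 h2) _.
  rewrite -subr_ge0.
  have hp2 : p ^+ 2 = P by rewrite sqrtCK.
  have -> : (p + L) ^+ 2 - (P + L ^+ 2) = 2 * p * L by rewrite -hp2; ring.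
  by rewrite mulr_ge0 // mulr_ge0.
apply: le_trans (_ : norm2 a <= p + L) _; first exact: E4.
set K := tau * sqrtC (k + t)%:R / (1 - theta) * (1 + beta / (1 - delta)) + tau.
have bd0 : 0 <= beta / (1 - delta) by rewrite divr_ge0 // ltW.
have K0 : 0 <= K.
  rewrite /K addr_ge0 // mulr_ge0 ?addr_ge0 ?ler01 //.
  by apply: divr_ge0; [exact: mulr_ge0 | exact: ltW].
have E5 : p + L <= K * N.
  apply: le_trans (lerD E1 (lexx L)) _.
  have -> : tau * N + beta / (1 - delta) * L + L = tau * N + (1 + beta / (1 - delta)) * L by ring.
  apply: le_trans (lerD (lexx (tau * N)) (ler_wpM2l _ E3)) _.
    by rewrite addr_ge0 ?ler01.
  have -> : tau * N + (1 + beta / (1 - delta)) * (sqrtC (k + t)%:R * tau * N / (1 - theta)) = K * N by rewrite /K; ring.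
  by [].
apply: le_trans E5 _.
apply: le_trans (ler_wpM2l K0 hN) _.
have -> : K * (2 * eta) = (2 * tau * sqrtC (k + t)%:R / (1 - theta) * (1 + beta / (1 - delta)) + 2 * tau) * eta.
  by rewrite /K; ring.
by [].
Qed.
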